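(* Let $\mathfrak{H}$ be a Euclidean space and let $(\mathcal{X},\mathsf{S},\gamma,(\Lambda_{a})_{a\in\mathcal{A}})$ be a spectral decomposition system for $\mathfrak{H}$ such that the set $\{\Lambda_a\}_{a\in\mathcal{A}}$ is closed in $\mathscr{L}(\mathcal{X},\mathfrak{H})$. Let $D$ be a nonempty $\mathsf{S}$-invariant subset of $\mathcal{X}$ and let $X\in\mathfrak{H}$. Then \[ \operatorname{cone}\bigl(X-\operatorname{Proj}_{\gamma^{-1}(D)}X\bigr)=\bigl\{\Lambda_a y : y\in\operatorname{cone}\bigl(\gamma(X)-\operatorname{Proj}_D\gamma(X)\bigr)\ \text{and}\ a\in\mathcal{A}_X\bigr\}. \]
   Context: A Euclidean space is a finite-dimensional real Hilbert space; $\mathscr{L}(\mathcal{X},\mathfrak{H})$ carries the operator-norm topology. A spectral decomposition system for a Euclidean space $\mathfrak{H}$ is a tuple $(\mathcal{X},\mathsf{S},\gamma,(\Lambda_a)_{a\in\mathcal{A}})$ where $\mathcal{X}$ is a Euclidean space, $\mathsf{S}$ is a group acting on $\mathcal{X}$ such that each map $x\mapsto \mathsf{s}\cdot x$ is a linear isometry, $\gamma\colon\mathfrak{H}\to\mathcal{X}$ is a mapping, and each $\Lambda_a\colon\mathcal{X}\to\mathfrak{H}$ is a linear isometry, such that: [A] there exists a mapping $\tau\colon\mathcal{X}\to\mathcal{X}$ with $\tau(\mathsf{s}\cdot x)=\tau(x)$ for all $\mathsf{s},x$, $\tau(x)\in\mathsf{S}\cdot x$ for all $x$, and $\gamma\circ\Lambda_a=\tau$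 for all $a\in\mathcal{A}$; [B] for every $X\in\mathfrak{H}$ there exists $a\in\mathcal{A}$ with $X=\Lambda_a\gamma(X)$; [C] $\langle X,Y\rangle\le\langle\gamma(X),\gamma(Y)\rangle$ for all $X,Y\in\mathfrak{H}$. $\mathcal{A}_X=\{a\in\mathcal{A}:X=\Lambda_a\gamma(X)\}$. A set $D\subset\mathcal{X}$ is $\mathsf{S}$-invariant if $\mathsf{s}\cdot x\in D$ for all $x\in D$, $\mathsf{s}\in\mathsf{S}$. For a nonempty subset $C$ of a Euclidean space $\mathcal{H}$ and $x\in\mathcal{H}$, $\operatorname{Proj}_C x=\{y\in C:\|x-y\|=\inf_{z\in C}\|x-z\|\}$ (possibly empty). For a set $E$, $\operatorname{cone}E=\bigcup_{\alpha>0}\alpha E$, and $x-E=\{x-e:e\in E\}$. *)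

(* Defs.v *)
From HB Require Import structures.
From mathcomp Require Import all_boot all_order all_algebra.
From mathcomp Require Import all_classical all_reals.
Set Implicit Arguments. Unset Strict Implicit. Unset Printing Implicit Defensive.
Import Order.TTheory GRing.Theory Num.Theory.
Local Open Scope classical_set_scope.
Local Open Scope ring_scope.

(* Euclidean spaces of dimension n are modelled as row vectors 'rV[R]_n
   with the standard inner product; linear maps X -> H as matrices acting
   on the right: x |-> x *m L. *)

Definition edot (R : realType) (n : nat) (x y : 'rV[R]_n) : R := (x *m y^T) 0 0.
Definition enorm (R : realType) (n : nat) (x : 'rV[R]_n) : R := Num.sqrt (edot x x).

Definition Proj (R : realType) (n : nat) (C : set 'rV[R]_n) (x : 'rV[R]_n)
  : set 'rV[R]_n :=
  [set y | C y /\ enorm (x - y) = inf [set enorm (x - z) | z in C]].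

Definition cone (R : realType) (n : nat) (E : set 'rV[R]_n) : set 'rV[R]_n :=
  [set v | exists alpha : R, 0 < alpha /\ exists2 e, E e & v = alpha *: e].

Definition minus_set (R : realType) (n : nat) (x : 'rV[R]_n) (E : set 'rV[R]_n)
  : set 'rV[R]_n := [set x - e | e in E].

Definition opnorm (R : realType) (m n : nat) (L : 'M[R]_(m, n)) : R :=
  sup [set enorm (x *m L) | x in [set x : 'rV[R]_m | enorm x <= 1]].

Definition opnorm_closed (R : realType) (m n : nat) (E : set 'M[R]_(m, n)) : Prop :=
  forall L : 'M[R]_(m, n),
    (forall e : R, 0 < e -> exists2 L', E L' & opnorm (L - L') < e) -> E L.

Definition isometric_group_action (R : realType) (m : nat) (S : Type)
  (mul : S -> S -> S) (one : S) (inv : S -> S)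
  (act : S -> 'rV[R]_m -> 'rV[R]_m) : Prop :=
  [/\ (forall a b c, mul a (mul b c) = mul (mul a b) c)
      /\ (forall a, mul one a = a /\ mul a one = a)
      /\ (forall a, mul (inv a) a = one /\ mul a (inv a) = one),
      (forall x, act one x = x),
      (forall s t x, act (mul s t) x = act s (act t x)),
      (forall s (c : R) x y, act s (c *: x + y) = c *: act s x + act s y)
    & (forall s x, enorm (act s x) = enorm x)].

Definition orbit (R : realType) (m : nat) (S : Type)
  (act : S -> 'rV[R]_m -> 'rV[R]_m) (x : 'rV[R]_m) : set 'rV[R]_m :=
  [set act s x | s in [set: S]].

Definition S_invariant (R : realType) (m : nat) (S : Type)
  (act : S -> 'rV[R]_m -> 'rV[R]_m) (D : set 'rV[R]_m) : Prop :=
  forall x s, D x -> D (act s x).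

Definition spectral_decomposition_system (R : realType) (m n : nat)
  (S : Type) (mul : S -> S -> S) (one : S) (inv : S -> S)
  (act : S -> 'rV[R]_m -> 'rV[R]_m)
  (gamma : 'rV[R]_n -> 'rV[R]_m) (A : Type) (Lambda : A -> 'M[R]_(m, n)) : Prop :=
  [/\ isometric_group_action mul one inv act,
      (forall a x, enorm (x *m Lambda a) = enorm x),
      (* [A] *)
      (exists tau : 'rV[R]_m -> 'rV[R]_m,
         [/\ (forall s x, tau (act s x) = tau x),
             (forall x, orbit act x (tau x))
           & (forall a x, gamma (x *m Lambda a) = tau x)]),
      (* [B] *)
      (forall X, exists a, X = gamma X *m Lambda a)
    & (* [C] *)
      (forall X Y, edot X Y <= edot (gamma X) (gamma Y))].

Definition A_of (R : realType) (m n : nat) (gamma : 'rV[R]_n -> 'rV[R]_m)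
  (A : Type) (Lambda : A -> 'M[R]_(m, n)) (X : 'rV[R]_n) : set A :=
  [set a | X = gamma X *m Lambda a].

(* Main.v *)
Require Import Defs.
From HB Require Import structures.
From mathcomp Require Import all_boot all_order all_algebra.
From mathcomp Require Import all_classical all_reals.
From mathcomp Require Import lra.
Set Implicit Arguments. Unset Strict Implicit.
Import Order.TTheory GRing.Theory Num.Theory.
Local Open Scope classical_set_scope.
Local Open Scope ring_scope.

Lemma edotE (R : realType) n (x y : 'rV[R]_n) : edot x y = \sum_i x 0 i * y 0 i.
Proof. by rewrite /edot !mxE; apply: eq_bigr => i _; rewrite mxE. Qed.
Lemma edotC (R : realType) n (x y : 'rV[R]_n) : edot x y = edot y x.
Proof. by rewrite !edotE; apply: eq_bigr => i _; rewrite mulrC. Qed.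
Lemma edotDl (R : realType) n (x y z : 'rV[R]_n) : edot (x + y) z = edot x z + edot y z.
Proof. by rewrite !edotE -big_split; apply: eq_bigr => i _; rewrite mxE mulrDl. Qed.
Lemma edotZl (R : realType) n a (x z : 'rV[R]_n) : edot (a *: x) z = a * edot x z.
Proof. by rewrite !edotE mulr_sumr; apply: eq_bigr => i _; rewrite mxE mulrA. Qed.
Lemma edotNl (R : realType) n (x z : 'rV[R]_n) : edot (- x) z = - edot x z.
Proof. by rewrite -scaleN1r edotZl mulN1r. Qed.
Lemma edotBl (R : realType) n (x y z : 'rV[R]_n) : edot (x - y) z = edot x z - edot y z.
Proof. by rewrite edotDl edotNl. Qed.
Lemma edotDr (R : realType) n (x y z : 'rV[R]_n) : edot z (x + y) = edot z x + edot z y.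
Proof. by rewrite edotC edotDl !(edotC z). Qed.
Lemma edotBr (R : realType) n (x y z : 'rV[R]_n) : edot z (x - y) = edot z x - edot z y.
Proof. by rewrite edotC edotBl !(edotC z). Qed.
Lemma edotZr (R : realType) n a (x z : 'rV[R]_n) : edot z (a *: x) = a * edot z x.
Proof. by rewrite edotC edotZl (edotC z). Qed.
Lemma edot_ge0 (R : realType) n (x : 'rV[R]_n) : 0 <= edot x x.
Proof. by rewrite edotE sumr_ge0 // => i _; rewrite -expr2 sqr_ge0. Qed.
Lemma edot_eq0 (R : realType) n (x : 'rV[R]_n) : edot x x = 0 -> x = 0.
Proof.
rewrite edotE => /psumr_eq0P H; apply/rowP => i; rewrite mxE.
have /eqP := H (fun i0 _ => sqr_ge0 (x 0 i0)) i isT.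
by rewrite mulf_eq0 => /orP[] /eqP.
Qed.
Lemma enorm_eqE (R : realType) n k (x : 'rV[R]_n) (y : 'rV[R]_k) : (enorm x = enorm y) <-> (edot x x = edot y y).
Proof.
rewrite /enorm; split => [/eqP|->] //.
by rewrite eqr_sqrt ?edot_ge0 // => /eqP.
Qed.
Lemma enorm_leE (R : realType) n k (x : 'rV[R]_n) (y : 'rV[R]_k) : (enorm x <= enorm y) = (edot x x <= edot y y).
Proof. by rewrite /enorm ler_sqrt ?edot_ge0. Qed.
Lemma enorm_ge0 (R : realType) n (x : 'rV[R]_n) : 0 <= enorm x.
Proof. exact: sqrtr_ge0. Qed.

Lemma iso_dot (R : realType) m n (L : 'M[R]_(m,n)) :
  (forall x, enorm (x *m L) = enorm x) -> forall x y, edot (x *m L) (y *m L) = edot x y.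
Proof.
move=> H x y.
have h z : edot (z *m L) (z *m L) = edot z z.
  by apply/eqP; rewrite -eqr_sqrt ?edot_ge0 //; apply/eqP; exact: H z.
have := h (x + y); rewrite mulmxDl !edotDl !edotDr h h.
rewrite (edotC (y *m L)) (edotC y) => E; lra.
Qed.

Lemma simult (R : realType) (m n : nat) (gamma : 'rV[R]_n -> 'rV[R]_m)
  (A : Type) (Lambda : A -> 'M[R]_(m, n)) :
  (forall a x, enorm (x *m Lambda a) = enorm x) ->
  (forall a X, gamma (gamma X *m Lambda a) = gamma X) ->
  (forall X, exists a, X = gamma X *m Lambda a) ->
  (forall X Y, edot X Y <= edot (gamma X) (gamma Y)) ->
  forall X Y, edot X Y = edot (gamma X) (gamma Y) ->
  exists a, X = gamma X *m Lambda a /\ Y = gamma Y *m Lambda a.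
Proof.
move=> Hiso Hfix HB HC.
have gn X : edot (gamma X) (gamma X) = edot X X.
  by have [a Ha] := HB X; rewrite {3 4}Ha iso_dot.
move=> X Y H.
set U := gamma (X + Y); set V := gamma X + gamma Y.
have UV : U = V.
  apply/eqP; rewrite -subr_eq0; apply/eqP/edot_eq0.
  apply/eqP; rewrite eq_le edot_ge0 andbT.
  have c1 := HC (X + Y) X; have c2 := HC (X + Y) Y.
  have gU : edot U U = edot (X + Y) (X + Y) by rewrite gn.
  rewrite -/U in c1 c2.
  move: gU c1 c2; rewrite /V !edotBl !edotBr !edotDl !edotDr !gn.
  move=> g1 g2 g3.
  have e1 := edotC Y X; have e2 := edotC (gamma Y) (gamma X).
  have e3 := edotC (gamma X) U; have e4 := edotC (gamma Y) U.
  lra.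
have [a Ha] := HB (X + Y).
rewrite -/U UV mulmxDl in Ha.
set P := gamma X *m Lambda a in Ha *; set Q := gamma Y *m Lambda a in Ha *.
have PQ : edot P Q = edot X Y by rewrite iso_dot // H.
have gP : gamma P = gamma X by rewrite Hfix.
have gQ : gamma Q = gamma Y by rewrite Hfix.
have c3 := HC X Q; have c4 := HC P Y.
rewrite gQ in c3; rewrite gP in c4.
have QY : Q - Y = X - P.
  have -> : Q = X + Y - P by rewrite Ha addrC addKr.
  by rewrite addrAC addrK.
have : edot (Q - Y) (Q - Y) = 0.
  apply/eqP; rewrite eq_le edot_ge0 andbT.
  rewrite {1}QY !edotBl !edotBr; lra.
move/edot_eq0/eqP; rewrite subr_eq0 => /eqP EQ.
exists a; split => //.
by move: QY; rewrite EQ subrr => /eqP; rewrite eq_sym subr_eq0 => /eqP.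
Qed.

Theorem proposition3p3 (R : realType) (m n : nat)
  (S : Type) (mul : S -> S -> S) (one : S) (inv : S -> S)
  (act : S -> 'rV[R]_m -> 'rV[R]_m)
  (gamma : 'rV[R]_n -> 'rV[R]_m) (A : Type) (Lambda : A -> 'M[R]_(m, n)) :
  spectral_decomposition_system mul one inv act gamma Lambda ->
  opnorm_closed (range Lambda) ->
  forall D : set 'rV[R]_m, D !=set0 -> S_invariant act D ->
  forall X : 'rV[R]_n,
    cone (minus_set X (Proj (gamma @^-1` D) X)) =
    [set v | exists y, exists a,
       [/\ cone (minus_set (gamma X) (Proj D (gamma X))) y,
           A_of gamma Lambda X a & v = y *m Lambda a]].
Proof.
case=> _ Hiso [tau [Htau1 Htau2 Htau3]] HB HC _ D [p0 Dp0] HD X.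
have Hfix a Z : gamma (gamma Z *m Lambda a) = gamma Z.
  have [b Hb] := HB Z.
  by rewrite Htau3; rewrite {2}Hb Htau3.
have Dtau p : D p -> D (tau p).
  by move=> Dp; have [s _ <-] := Htau2 p; apply: HD.
have gn Z : edot (gamma Z) (gamma Z) = edot Z Z.
  by have [a Ha] := HB Z; rewrite {3 4}Ha iso_dot.
have [b Hb] := HB X.
set S1 := [set enorm (X - z) | z in gamma @^-1` D].
set S2 := [set enorm (gamma X - z) | z in D].
have lb1 : has_lbound S1 by exists 0 => _ [z _ <-]; apply: enorm_ge0.
have lb2 : has_lbound S2 by exists 0 => _ [z _ <-]; apply: enorm_ge0.
have leg Z : enorm (gamma X - gamma Z) <= enorm (X - Z).
  rewrite enorm_leE !edotBl !edotBr !gn.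
  have := HC X Z; have e1 := edotC Z X; have e2 := edotC (gamma Z) (gamma X).
  lra.
have d12 : inf S1 = inf S2.
  apply/eqP; rewrite eq_le; apply/andP; split.
  - apply: lb_le_inf; first by exists (enorm (gamma X - p0)), p0.
    move=> _ [z Dz <-].
    apply: (ge_inf lb1); exists (z *m Lambda b); first by rewrite /preimage /= Htau3; apply: Dtau.
    by rewrite {1}Hb -mulmxBl Hiso.
  - apply: lb_le_inf.
      exists (enorm (X - p0 *m Lambda b)), (p0 *m Lambda b) => //.
      by rewrite /preimage /= Htau3; apply: Dtau.
    move=> _ [Z DZ <-].
    apply: le_trans (leg Z); apply: (ge_inf lb2); by exists (gamma Z).
apply/seteqP; split => v.
- case=> al [al0 [_ [Y [HY1 HY2] <-] ->]].
  have i2 : inf S2 <= enorm (gamma X - gamma Y) by apply: (ge_inf lb2); exists (gamma Y).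
  have l := leg Y.
  have E1 : enorm (gamma X - gamma Y) = enorm (X - Y) by rewrite HY2 -/S1; lra.
  have E2 : enorm (gamma X - gamma Y) = inf S2 by rewrite -d12 -HY2 -/S1; lra.
  have Hdot : edot X Y = edot (gamma X) (gamma Y).
    move: E1 => /enorm_eqE; rewrite !edotBl !edotBr !gn.
    have e1 := edotC Y X; have e2 := edotC (gamma Y) (gamma X); lra.
  have [a [HXa HYa]] := simult Hiso Hfix HB HC Hdot.
  exists (al *: (gamma X - gamma Y)), a; split => //.
    exists al; split => //; exists (gamma X - gamma Y) => //.
    by exists (gamma Y).
  by rewrite -scalemxAl mulmxBl -HXa -HYa.
- case=> _ [a [[al [al0 [_ [p [Hp1 Hp2] <-] ->]]] Ha ->]].
  rewrite /A_of /= in Ha.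
  exists al; split => //; exists (X - p *m Lambda a).
    exists (p *m Lambda a) => //; split.
      by rewrite /preimage /= Htau3; apply: Dtau.
    by rewrite {1}Ha -mulmxBl Hiso Hp2 -/S2 d12.
  by rewrite -scalemxAl mulmxBl -Ha.
Qed.
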